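(* Let $r$ and $t$ be positive integers with $r\ge 3$ and $2\le t\le \frac{r+3}{3}$, and let $n=3r-t$. If $\rho_2(K(n,r))\ge 4$, then there exists a $2$-packing $S$ of $K(n,r)$ with $|S|=4$ such that $i_x(S)\le 2$ for every $x\in[n]$.
   Context: For integers $n\ge 2r$, the Kneser graph $K(n,r)$ has as vertices the $r$-element subsets of $[n]=\{1,\dots,n\}$, two vertices being adjacent iff they are disjoint. A $2$-packing of a graph $G$ is a set of vertices pairwise at distance at least $3$ in $G$; $\rho_2(G)$ is the maximum cardinality of a $2$-packing. For a set $S$ of vertices of $K(n,r)$ and $x\in[n]$, $i_x(S)=|\{u\in S: x\in u\}|$ is the number of vertices of $S$ containing $x$. *)

(* Defs.v *)
From mathcomp Require Import all_boot all_order.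
Set Implicit Arguments.
Unset Strict Implicit.
Unset Printing Implicit Defensive.

(* Vertices of the Kneser graph K(n,r): r-element subsets of [n],
   where [n] = {1..n} is represented by 'I_n = {0..n-1}. *)
Definition kvert (n r : nat) := {A : {set 'I_n} | #|A| == r}.

Definition kadj (n r : nat) (u v : kvert n r) : bool :=
  [disjoint val u & val v].

Definition kdist_ge3 (n r : nat) (u v : kvert n r) : bool :=
  [&& u != v, ~~ kadj u v & ~~ [exists w : kvert n r, kadj u w && kadj w v]].

Definition two_packing (n r : nat) (S : {set kvert n r}) : bool :=
  [forall u in S, forall v in S, (u != v) ==> kdist_ge3 u v].

Definition rho2_ge (n r k : nat) : Prop :=
  exists S : {set kvert n r}, two_packing S /\ k <= #|S|.

Definition i_x (n r : nat) (S : {set kvert n r}) (x : 'I_n) : nat :=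
  #|[set u in S | x \in val u]|.

(* Main.v *)
Require Import Defs.
From mathcomp Require Import all_boot all_order zify.

Lemma card_ordP n (P : nat -> bool) : #|[set x : 'I_n | P x]| = count P (iota 0 n).
Proof.
rewrite cardsE cardE /enum_mem -enumT -val_enum_ord count_map size_filter.
by apply: eq_count.
Qed.

Lemma cardU_le (T : finType) (A B : {set T}) : #|A :|: B| <= #|A| + #|B|.
Proof. by rewrite -cardsUI leq_addr. Qed.

Lemma no_common n r (A B W : {set 'I_n}) : #|A| = r -> #|B| = r -> #|W| = r ->
  [disjoint A & W] -> [disjoint W & B] -> 3 * r <= n + #|A :&: B|.
Proof.
move=> hA hB hW dAW dWB.
have h1 := cardsUI A B.
have h2 := cardsUI (A :|: B) W.
have e : (A :|: B) :&: W = set0.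
  rewrite setIUl (disjoint_setI0 dAW) set0U setIC.
  by rewrite (disjoint_setI0 dWB).
rewrite e cards0 in h2.
have h3 : #|A :|: B :|: W| <= n by rewrite -[n in _ <= n]card_ord max_card.
lia.
Qed.

Lemma sub_of_card (T : finType) (C : {set T}) k : k <= #|C| ->
  exists W : {set T}, W \subset C /\ #|W| = k.
Proof.
move=> hk; exists [set x in take k (enum C)]; split.
  by apply/subsetP => x; rewrite inE => /mem_take; rewrite mem_enum.
rewrite cardsE; move/card_uniqP: (take_uniq k (enum_uniq (mem C))) => ->.
rewrite size_take -cardE; case: ifP => // /negbT; rewrite -leqNgt => h.
by apply/eqP; rewrite eqn_leq h hk.
Qed.

Lemma dist_of n r (u v : kvert n r) : 1 <= #|val u :&: val v| ->
  n + #|val u :&: val v| < 3 * r -> #|val u :&: val v| < r -> kdist_ge3 u v.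
Proof.
case: u => A hA; case: v => B hB /= h1 h2 h3.
have hA' := eqP hA; have hB' := eqP hB.
apply/and3P; split.
- apply/negP => /eqP [] e; rewrite -e setIid hA' ltnn in h3; done.
- rewrite /kadj /=; apply/negP => /disjoint_setI0 e; rewrite e cards0 in h1; done.
- apply/negP => /existsP [[W hW] /andP [d1 d2]].
  rewrite /kadj /= in d1 d2.
  move/eqP: hW => hW.
  by have := @no_common n r A B W hA' hB' hW d1 d2; rewrite leqNgt h2.
Qed.

Lemma pack_bound n r (u v : kvert n r) : r <= n -> kdist_ge3 u v ->
  n + #|val u :&: val v| < 3 * r.
Proof.
case: u => A hA; case: v => B hB /= hrn /and3P [_ _ /negP H].
have hA' := eqP hA; have hB' := eqP hB.
rewrite ltnNge; apply/negP => hle.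
have hC := cardsC (A :|: B); rewrite card_ord in hC.
have hU := cardsUI A B.
have [W [sW cW]] : exists W : {set 'I_n}, W \subset ~: (A :|: B) /\ #|W| = r.
  apply: (@sub_of_card _ (~: (A :|: B)) r).
  move: hle hC hU hA' hB'; set a := #|A :&: B|; set c := #|~: (A :|: B)|; set u := #|A :|: B|; lia.
apply: H; apply/existsP; exists (exist _ W (introT eqP cW)).
rewrite /kadj /=; apply/andP; split.
- rewrite disjoint_subset; apply/subsetP => x xA; rewrite !inE; apply/negP => xW.
  by move/subsetP: sW => /(_ x xW); rewrite !inE xA.
- rewrite disjoint_subset; apply/subsetP => x xW; move/subsetP: sW => /(_ x xW).
  by rewrite !inE negb_or => /andP[_ ->].
Qed.

Definition memb (s p i k : nat) : bool :=
 match i with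
 | 0 => (k < 3 * s) || (6 * s <= k < 6 * s+p)
 | 1 => (k < s) || (3 * s <= k < 5 * s) || (6 * s+p <= k < 6 * s+2 * p)
 | 2 => (s <= k < 2 * s) || (3 * s <= k < 4 * s) || (5 * s <= k < 6 * s) || (6 * s+2 * p <= k < 6 * s+3 * p)
 | _ => (2 * s <= k < 3 * s) || (4 * s <= k < 6 * s) || (6 * s+3 * p <= k < 6 * s+4 * p)
 end.

Definition bl (i j : nat) : nat := match i, j with
 | 0,1 | 1,0 => 0 | 0,2 | 2,0 => 1 | 0,3 | 3,0 => 2 | 1,2 | 2,1 => 3 | 1,3 | 3,1 => 4 | _,_ => 5 end.

Lemma cnt_true (P : pred nat) a b : (forall k, a <= k < a + b -> P k) -> count P (iota a b) = b.
Proof.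
move=> h; rewrite (@eq_in_count _ _ predT) ?count_predT ?size_iota // => k.
by rewrite mem_iota => /h ->.
Qed.

Lemma cnt_false (P : pred nat) a b : (forall k, a <= k < a + b -> ~~ P k) -> count P (iota a b) = 0.
Proof.
move=> h; rewrite (@eq_in_count _ _ pred0) ?count_pred0 // => k.
by rewrite mem_iota => /h /negbTE ->.
Qed.

Ltac solve_cnt := repeat match goal with |- context [count ?P (iota ?a ?b)] =>
  first [rewrite (@cnt_true P a b); [|move=> k hk; rewrite /memb /=; lia]
        | rewrite (@cnt_false P a b); [|move=> k hk; rewrite /memb /=; lia]] end.

Lemma card_memb s p e i : i < 4 ->
  count (memb s p i) (iota 0 (6 * s+4 * p+e)) = 3 * s + p.
Proof.
move=> hi.
have -> : 6 * s+4 * p+e = s+(s+(s+(s+(s+(s+(p+(p+(p+(p+e))))))))) by lia.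
rewrite !iotaD !count_cat.
case: i hi => [|[|[|[|i]]]] // _; solve_cnt; lia.
Qed.

Lemma card_int n a b : a + b <= n -> count (fun k => a <= k < a + b) (iota 0 n) = b.
Proof.
move=> h; have -> : n = a + (b + (n - a - b)) by lia.
rewrite !iotaD !count_cat.
rewrite (@cnt_false _ 0 a); last by move=> k hk; lia.
rewrite (@cnt_true _ (0 + a) b); last by move=> k hk; lia.
rewrite (@cnt_false _ (0 + a + b)); last by move=> k hk; lia.
by rewrite add0n addn0.
Qed.

Lemma inter_props s p i j : 1 <= s -> i < 4 -> j < 4 -> i != j ->
  (memb s p i (bl i j * s) && memb s p j (bl i j * s)) /\
  (forall k, memb s p i k -> memb s p j k -> bl i j * s <= k < bl i j * s + s).
Proof.
move=> hs.
case: i => [|[|[|[|i]]]] // _; case: j => [|[|[|[|j]]]] // _ _;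
  rewrite /memb /bl /=; split; try lia; move=> k; lia.
Qed.

Lemma memb_lt s p i k : memb s p i k -> k < 6 * s+4 * p.
Proof. case: i => [|[|[|[|i]]]]; rewrite /memb /=; lia. Qed.

Lemma bl_le i j : bl i j <= 5.
Proof. by case: i => [|[|[|[|i]]]]; case: j => [|[|[|[|j]]]]. Qed.

Lemma bonf (T : finType) (A B C D : {set T}) : #|A|+#|B|+#|C|+#|D| <=
  #|A :|: B :|: C :|: D| + #|A:&:B| + #|A:&:C| + #|A:&:D| + #|B:&:C| + #|B:&:D| + #|C:&:D|.
Proof.
have h1 := cardsUI A B.
have h2 := cardsUI (A :|: B) C.
have h3 := cardsUI (A :|: B :|: C) D.
have h4 : #|(A :|: B) :&: C| <= #|A :&: C| + #|B :&: C| by rewrite setIUl cardU_le.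
have h5 : #|(A :|: B :|: C) :&: D| <= #|A :&: D| + #|B :&: D| + #|C :&: D|.
  rewrite !setIUl; have := cardU_le _ (A:&:D :|: B:&:D) (C:&:D).
  have := cardU_le _ (A:&:D) (B:&:D); lia.
lia.
Qed.

Lemma step1 n r : r <= n -> rho2_ge n r 4 -> 5 * n + 6 <= 14 * r.
Proof.
move=> hrn [S [hp hS]].
have P : forall u v, u \in S -> v \in S -> u != v -> n + #|val u :&: val v| < 3 * r.
  move=> u v hu hv huv; apply: pack_bound => //.
  by move/forallP: hp => /(_ u)/implyP/(_ hu)/forallP/(_ v)/implyP/(_ hv)/implyP/(_ huv).
have U := enum_uniq (mem S).
have hc := cardE S.
have hm : forall x, x \in enum S -> x \in S by move=> x; rewrite mem_enum.
case E: (enum S) hc U hm => [|v1 [|v2 [|v3 [|v4 l]]]] hc U hm; rewrite hc /= in hS => //.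
rewrite /= !inE !negb_or in U.
move: U => /andP [/and4P [n12 n13 n14 _] /andP [/and3P [n23 n24 _] /andP [/andP [n34 _] _]]].
have i1 : v1 \in S by apply: hm; rewrite !inE eqxx.
have i2 : v2 \in S by apply: hm; rewrite !inE eqxx !orbT.
have i3 : v3 \in S by apply: hm; rewrite !inE eqxx !orbT.
have i4 : v4 \in S by apply: hm; rewrite !inE eqxx !orbT.
have p12 := P _ _ i1 i2 n12.
have p13 := P _ _ i1 i3 n13.
have p14 := P _ _ i1 i4 n14.
have p23 := P _ _ i2 i3 n23.
have p24 := P _ _ i2 i4 n24.
have p34 := P _ _ i3 i4 n34.
have hb := bonf _ (val v1) (val v2) (val v3) (val v4).
have hU : #|val v1 :|: val v2 :|: val v3 :|: val v4| <= n.
  by rewrite -[n in _ <= n]card_ord max_card.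
have c1 := eqP (valP v1). have c2 := eqP (valP v2).
have c3 := eqP (valP v3). have c4 := eqP (valP v4).
clear -hb hU c1 c2 c3 c4 p12 p13 p14 p23 p24 p34.
move: hb hU c1 c2 c3 c4 p12 p13 p14 p23 p24 p34.
set a1 := #|val v1|. set a2 := #|val v2|. set a3 := #|val v3|. set a4 := #|val v4|.
set m12 := #|val v1 :&: val v2|. set m13 := #|val v1 :&: val v3|. set m14 := #|val v1 :&: val v4|.
set m23 := #|val v2 :&: val v3|. set m24 := #|val v2 :&: val v4|. set m34 := #|val v3 :&: val v4|.
set uu := #|_ :|: _|.
clearbody a1 a2 a3 a4 m12 m13 m14 m23 m24 m34 uu; lia.
Qed.

Lemma construct n r s p e : 1 <= s -> r = 3 * s + p -> n = 6 * s + 4 * p + e -> n + s < 3 * r ->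
 exists S : {set kvert n r}, [/\ two_packing S, #|S| = 4 & forall x, i_x S x <= 2].
Proof.
move=> hs hr hn hlt.
pose A (i : 'I_4) : {set 'I_n} := [set x : 'I_n | memb s p i x].
have cA : forall i, #|A i| == r.
  by move=> i; rewrite /A card_ordP hn card_memb // hr.
pose V i : kvert n r := exist _ (A i) (cA i).
have key : forall i j : 'I_4, i != j -> kdist_ge3 (V i) (V j).
  move=> i j hij.
  have [h1 h2] := inter_props s p i j hs (ltn_ord i) (ltn_ord j) hij.
  have hm : #|A i :&: A j| <= s.
    have sub : A i :&: A j \subset [set x : 'I_n | bl i j * s <= x < bl i j * s + s].
      apply/subsetP => x; rewrite !inE => /andP [hi hj]; exact: h2.
    apply: leq_trans (subset_leq_card sub) _.
    rewrite (card_ordP n (fun k => bl i j * s <= k < bl i j * s + s)) card_int //.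
    have : bl i j * s <= 5 * s by rewrite leq_mul2r bl_le orbT.
    lia.
  apply: dist_of => /=.
  - have hk : bl i j * s < n by move/andP: h1 => [/memb_lt ? _]; lia.
    apply/card_gt0P; exists (Ordinal hk); rewrite !inE /=; exact: h1.
  - apply: (leq_ltn_trans (leq_add (leqnn n) hm)); lia.
  - apply: (leq_ltn_trans hm); lia.
have inj : injective V.
  move=> i j eij; apply/eqP; apply/negP => /negP hij.
  by have := key i j hij; rewrite eij /kdist_ge3 eqxx.
exists (V @: setT); split.
- apply/forallP => u; apply/implyP => /imsetP [i _ ->].
  apply/forallP => v; apply/implyP => /imsetP [j _ ->].
  apply/implyP => hij; apply: key; apply: contraNneq hij => ->; done.
- by rewrite card_imset // cardsT card_ord.
- move=> x; rewrite /i_x.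
  have sub : [set u in V @: setT | x \in val u] \subset V @: [set i : 'I_4 | memb s p i x].
    apply/subsetP => u; rewrite !inE => /andP [/imsetP [i _ ->] hx].
    apply/imsetP; exists i => //; rewrite inE; rewrite /= inE in hx; exact: hx.
  apply: leq_trans (subset_leq_card sub) _; rewrite card_imset //.
  rewrite (card_ordP 4 (fun i => memb s p i x)) /= /memb /=; lia.
Qed.

Theorem lemma4p6 (r t : nat) :
  3 <= r -> 2 <= t -> 3 * t <= r + 3 ->
  rho2_ge (3 * r - t) r 4 ->
  exists S : {set kvert (3 * r - t) r},
    [/\ two_packing S, #|S| = 4 & forall x : 'I_(3 * r - t), i_x S x <= 2].
Proof.
move=> h3 h2 h3t hrho.
have hrn : r <= 3 * r - t by lia.
have h1 := @step1 (3 * r - t) r hrn hrho.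
apply: (@construct (3 * r - t) r (t - 1) (r - 3 * (t - 1)) (3 * r - t - (6 * (t - 1) + 4 * (r - 3 * (t - 1))))); lia.
Qed.
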